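(* Let $(H,R)$ be a finite-dimensional quasitriangular Hopf algebra and $\pi:H\to K$ a surjective Hopf algebra map. Let $L=\{((f\circ\pi)\otimes\mathrm{id})(R_{21}\cdot R)\mid f\in K^*\}\subseteq H$, let $L^+=L\cap\ker\epsilon$, let $K'=H/HL^+$ with quotient map $\pi':H\to K'$. Regard $\mathrm{Rep}_f(K)$ and $\mathrm{Rep}_f(K')$ as full braided tensor subcategories of $\mathrm{Rep}_f(H)$ via pullback along $\pi$ and $\pi'$. Then $\mathrm{Rep}_f(K')$ is the relative Müger centralizer of $\mathrm{Rep}_f(K)$ in $\mathrm{Rep}_f(H)$, i.e. a finite-dimensional $H$-module $Y$ lies in $\mathrm{Rep}_f(K')$ if and only if $c_{Y,X}c_{X,Y}=\mathrm{id}_{X\otimes Y}$ for all $X\in\mathrm{Rep}_f(K)$.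
   Context: $(H,R)$ quasitriangular: $R=\sum_iR_i\otimes R^i$ invertible with $(\Delta\otimes\mathrm{id})(R)=R_{13}R_{23}$, $(\mathrm{id}\otimes\Delta)(R)=R_{13}R_{12}$, $\tau\Delta(h)=R\Delta(h)R^{-1}$. $R_{21}=\sum_iR^i\otimes R_i$ and $R_{21}\cdot R$ is the product in $H\otimes H$. $L$ is a normal left coideal subalgebra of $H$, so $HL^+$ is a Hopf ideal and $K'$ is a quotient Hopf algebra. $\mathrm{Rep}_f(H)$ is the braided tensor category of finite-dimensional left $H$-modules with braiding $c_{X,Y}(x\otimes y)=\sum_iR^iy\otimes R_ix$; $K$ and $K'$ carry the quasitriangular structures $(\pi\otimes\pi)(R)$ and $(\pi'\otimes\pi')(R)$. *)

(* Defs.v *)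
(* Finite-dimensional Hopf algebras over a field F are
   encoded by structure constants with respect to a basis e_0..e_{n-1}.
   Elements of H are row vectors 'rV[F]_n (coordinates); elements of
   H (x) H are matrices 'M[F]_(n,n): T stands for sum_{a,b} T a b e_a (x) e_b. *)
From HB Require Import structures.
From mathcomp Require Import all_boot all_algebra.
Set Implicit Arguments. Unset Strict Implicit. Unset Printing Implicit Defensive.
Import GRing.Theory.
Local Open Scope ring_scope.

Record hopf_data (F : fieldType) (n : nat) := HopfData {
  hmul : 'I_n -> 'I_n -> 'rV[F]_n;
  hunit : 'rV[F]_n;
  hcomul : 'I_n -> 'M[F]_(n, n);
  hcounit : 'I_n -> F;
  hantipode : 'I_n -> 'rV[F]_n }.

Section Hopf.
Variables (F : fieldType) (n : nat) (H : hopf_data F n).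

Definition basisv (i : 'I_n) : 'rV[F]_n := delta_mx 0 i.
Definition mulv (a b : 'rV[F]_n) : 'rV[F]_n :=
  \sum_i \sum_j (a 0 i * b 0 j) *: hmul H i j.
Definition comulv (a : 'rV[F]_n) : 'M[F]_(n, n) := \sum_i a 0 i *: hcomul H i.
Definition counitv (a : 'rV[F]_n) : F := \sum_i a 0 i * hcounit H i.
Definition antipodev (a : 'rV[F]_n) : 'rV[F]_n := \sum_i a 0 i *: hantipode H i.
Definition tens (a b : 'rV[F]_n) : 'M[F]_(n, n) := a^T *m b.
Definition mulT (T U : 'M[F]_(n, n)) : 'M[F]_(n, n) :=
  \sum_i \sum_j \sum_k \sum_l (T i j * U k l) *: tens (hmul H i k) (hmul H j l).
Definition oneT : 'M[F]_(n, n) := tens (hunit H) (hunit H).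

Definition is_hopf : Prop :=
  (forall a b c, mulv (mulv a b) c = mulv a (mulv b c)) /\
  (forall a, mulv (hunit H) a = a /\ mulv a (hunit H) = a) /\
  (* coassociativity, coordinatewise in H (x) H (x) H *)
  (forall i a b c, \sum_j hcomul H i j c * hcomul H j a b
                   = \sum_j hcomul H i a j * hcomul H j b c) /\
  (forall i k, \sum_j hcounit H j * hcomul H i j k = (i == k)%:R /\
               \sum_j hcounit H j * hcomul H i k j = (i == k)%:R) /\
  (forall i j, comulv (hmul H i j) = mulT (hcomul H i) (hcomul H j)) /\
  comulv (hunit H) = oneT /\
  (forall i j, counitv (hmul H i j) = hcounit H i * hcounit H j) /\
  counitv (hunit H) = 1 /\
  (forall i, \sum_a \sum_b hcomul H i a b *: mulv (hantipode H a) (basisv b)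
             = hcounit H i *: hunit H /\
             \sum_a \sum_b hcomul H i a b *: mulv (basisv a) (hantipode H b)
             = hcounit H i *: hunit H).

(* R = sum_{a,b} R a b e_a (x) e_b ; R_21 corresponds to R^T, tau to transposition *)
Definition quasitriangular (R : 'M[F]_(n, n)) : Prop :=
  (exists Ri : 'M[F]_(n, n),
     mulT R Ri = oneT /\ mulT Ri R = oneT /\
     (forall h, mulT (mulT R (comulv h)) Ri = (comulv h)^T)) /\
  (* (Delta (x) id)(R) = R_13 R_23 *)
  (forall a b c, \sum_i R i c * hcomul H i a b
                 = \sum_q \sum_s R a q * R b s * hmul H q s 0 c) /\
  (* (id (x) Delta)(R) = R_13 R_12 *)
  (forall a b c, \sum_q R a q * hcomul H q b c
                 = \sum_p \sum_r R p c * R r b * hmul H p r 0 a).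

(* finite-dimensional left H-modules: F^p (column vectors), with e_i acting by act i *)
Definition actv (p : nat) (act : 'I_n -> 'M[F]_p) (a : 'rV[F]_n) : 'M[F]_p :=
  \sum_i a 0 i *: act i.
Definition is_module (p : nat) (act : 'I_n -> 'M[F]_p) : Prop :=
  actv act (hunit H) = 1%:M /\
  (forall a b, actv act (mulv a b) = actv act a *m actv act b).

End Hopf.

(* X (x) Y for X = F^m, Y = F^p is 'M_(m,p), with x (x) y := x *m y^T.
   braiding c_{X,Y}(x (x) y) = sum_i R^i y (x) R_i x  (R = sum_i R_i (x) R^i). *)
Definition braid (F : fieldType) (n m p : nat) (R : 'M[F]_(n, n))
    (X : 'I_n -> 'M[F]_m) (Y : 'I_n -> 'M[F]_p) (Z : 'M[F]_(m, p)) : 'M[F]_(p, m) :=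
  \sum_a \sum_b R a b *: (Y b *m Z^T *m (X a)^T).

(* Hopf algebra map pi : H -> K, pi(x) = x *m P *)
Definition hopf_map (F : fieldType) (n k : nat) (H : hopf_data F n)
    (K : hopf_data F k) (P : 'M[F]_(n, k)) : Prop :=
  (forall a b, mulv H a b *m P = mulv K (a *m P) (b *m P)) /\
  hunit H *m P = hunit K /\
  (forall a, comulv K (a *m P) = P^T *m comulv H a *m P) /\
  (forall a, counitv K (a *m P) = counitv H a) /\
  (forall a, antipodev H a *m P = antipodev K (a *m P)).

Definition pullback (F : fieldType) (n k m : nat) (P : 'M[F]_(n, k))
    (X : 'I_k -> 'M[F]_m) : 'I_n -> 'M[F]_m :=
  fun j => \sum_l P j l *: X l.

Section Lsub.
Variables (F : fieldType) (n k : nat) (H : hopf_data F n)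
          (R : 'M[F]_(n, n)) (P : 'M[F]_(n, k)).
(* f in K^* is a column vector f, f(y) = y *m f;
   ((f o pi) (x) id)(R_21 R) *)
Definition Lelt (f : 'cV[F]_k) : 'rV[F]_n := (P *m f)^T *m mulT H R^T R.
Definition in_L (x : 'rV[F]_n) : Prop := exists f, x = Lelt f.
Definition in_Lplus (x : 'rV[F]_n) : Prop := in_L x /\ counitv H x = 0.
Definition in_HLplus (x : 'rV[F]_n) : Prop :=
  exists (N : nat) (hs ls : 'I_N -> 'rV[F]_n),
    (forall t, in_Lplus (ls t)) /\ x = \sum_t mulv H (hs t) (ls t).
(* Y lies in Rep_f(K'), K' = H / H L^+: the action factors through
   pi' : H -> H/HL^+, i.e. ker pi' = H L^+ acts by zero *)
Definition in_Rep_quot (p : nat) (Y : 'I_n -> 'M[F]_p) : Prop :=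
  forall x, in_HLplus x -> actv Y x = 0.
End Lsub.

(* Main.v *)
Require Import Defs.
From HB Require Import structures.
From mathcomp Require Import all_boot all_algebra ring.
Set Implicit Arguments. Unset Strict Implicit. Unset Printing Implicit Defensive.
Import GRing.Theory.
Local Open Scope ring_scope.

Section Aux.
Variables (F : fieldType) (n : nat).

Lemma actv_sum (I : finType) p (act : 'I_n -> 'M[F]_p) (a : I -> 'rV[F]_n) :
  actv act (\sum_t a t) = \sum_t actv act (a t).
Proof.
rewrite /actv exchange_big /=; apply: eq_bigr => i _.
by rewrite summxE scaler_suml.
Qed.

Lemma actvZ p (act : 'I_n -> 'M[F]_p) c a : actv act (c *: a) = c *: actv act a.
Proof. by rewrite /actv scaler_sumr; apply: eq_bigr => i _; rewrite mxE scalerA. Qed.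

Lemma actvB p (act : 'I_n -> 'M[F]_p) a b : actv act (a - b) = actv act a - actv act b.
Proof. by rewrite /actv -sumrB; apply: eq_bigr => i _; rewrite !mxE scalerBl. Qed.

Lemma actv_basis p (act : 'I_n -> 'M[F]_p) i : actv act (basisv F i) = act i.
Proof.
rewrite /actv (bigD1 i) //= big1 ?addr0 => [|j Hj]; rewrite /basisv mxE.
  by rewrite eqxx eqxx scale1r.
by rewrite (negbTE Hj) andbF scale0r.
Qed.

Lemma mulv_basis (H : hopf_data F n) i j : mulv H (basisv F i) (basisv F j) = hmul H i j.
Proof.
rewrite /mulv (bigD1 i) //= (bigD1 j) //= !big1 ?addr0.
- by rewrite !mxE !eqxx mul1r scale1r.
- move=> i' Hi; apply: big1 => j' _; rewrite !mxE (negbTE Hi) andbF mul0r scale0r //.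
- move=> j' Hj; rewrite !mxE (negbTE Hj) andbF mulr0 scale0r //.
Qed.
End Aux.
Section Eps.
Variables (F : fieldType) (n : nat) (H : hopf_data F n).
Definition epsr : 'rV[F]_n := \row_i hcounit H i.
Definition epsL (T : 'M[F]_(n,n)) : 'rV[F]_n := epsr *m T.
Definition epsR (T : 'M[F]_(n,n)) : 'rV[F]_n := epsL T^T.

Lemma counitvE a : counitv H a = (a *m epsr^T) 0 0.
Proof. by rewrite /counitv mxE; apply: eq_bigr => i _; rewrite !mxE. Qed.

Lemma epsL_tens a b : epsL (tens a b) = counitv H a *: b.
Proof.
rewrite /epsL /tens mulmxA -mul_scalar_mx; congr (_ *m _).
apply/matrixP => i j; rewrite !ord1 !mxE counitvE !mxE eqxx mulr1n.
by apply: eq_bigr => k _; rewrite !mxE mulrC.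
Qed.

Lemma mulv_sum4 (A B : 'rV[F]_n) :
  mulv H A B = \sum_j \sum_l (A 0 j * B 0 l) *: hmul H j l.
Proof. by []. Qed.

Hypothesis counit_mul : forall i j, counitv H (hmul H i j) = hcounit H i * hcounit H j.

Lemma epsL_mulT T U : epsL (mulT H T U) = mulv H (epsL T) (epsL U).
Proof.
rewrite /mulT /epsL /mulv.
rewrite mulmx_sumr.
under eq_bigr do rewrite mulmx_sumr; under eq_bigr do under eq_bigr do rewrite mulmx_sumr.
under eq_bigr do under eq_bigr do under eq_bigr do rewrite mulmx_sumr.
under eq_bigr do under eq_bigr do under eq_bigr do under eq_bigr do
  rewrite -scalemxAr -/(epsL _) epsL_tens counit_mul scalerA.
symmetry.
rewrite [RHS]exchange_big /=; apply: eq_bigr => j _.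
rewrite [RHS](eq_bigr (fun i => \sum_l \sum_k (T i j * U k l * (hcounit H i * hcounit H k)) *: hmul H j l)); last first.
  by move=> i _; rewrite exchange_big.
rewrite [RHS]exchange_big /=; apply: eq_bigr => l _.
rewrite !mxE mulr_suml scaler_suml; apply: eq_bigr => i _.
rewrite mulr_sumr scaler_suml; apply: eq_bigr => k _.
by rewrite !mxE; congr (_ *: _); ring.
Qed.

End Eps.

Section Eps2.
Variables (F : fieldType) (n : nat) (H : hopf_data F n).

Lemma mulv_epsLE (A B : 'M[F]_n) c :
  (mulv H (epsL H A) (epsL H B)) 0 c =
  \sum_a \sum_b (hcounit H a * hcounit H b) *
     \sum_q \sum_s A a q * B b s * hmul H q s 0 c.
Proof.
rewrite /mulv summxE.
rewrite (eq_bigr (fun q => \sum_s \sum_a \sum_b hcounit H a * hcounit H b * (A a q * B b s * hmul H q s 0 c))); last first.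
  move=> q _; rewrite summxE; apply: eq_bigr => s _.
  rewrite !mxE mulr_suml mulr_suml; apply: eq_bigr => a _.
  rewrite mulr_sumr mulr_suml; apply: eq_bigr => b _; rewrite !mxE; ring.
rewrite exchange_big /=.
rewrite (eq_bigr (fun s => \sum_a \sum_q \sum_b hcounit H a * hcounit H b * (A a q * B b s * hmul H q s 0 c))); last first.
  by move=> s _; rewrite exchange_big.
rewrite exchange_big /=; apply: eq_bigr => a _.
rewrite (eq_bigr (fun s => \sum_b \sum_q hcounit H a * hcounit H b * (A a q * B b s * hmul H q s 0 c))); last first.
  by move=> s _; rewrite exchange_big.
rewrite exchange_big /=; apply: eq_bigr => b _.
rewrite mulr_sumr exchange_big /=; apply: eq_bigr => q _.
by rewrite mulr_sumr.
Qed.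
End Eps2.

Section Eps3.
Variables (F : fieldType) (n : nat) (H : hopf_data F n) (R : 'M[F]_n).
Hypothesis counitL : forall i k, \sum_j hcounit H j * hcomul H i j k = (i == k)%:R.
Hypothesis counitR : forall i k, \sum_j hcounit H j * hcomul H i k j = (i == k)%:R.

Lemma sum_delta (f : 'I_n -> F) b : \sum_i f i * (i == b)%:R = f b.
Proof.
rewrite (bigD1 b) //= eqxx mulr1 big1 ?addr0 // => i Hi; by rewrite (negbTE Hi) mulr0.
Qed.

Hypothesis ax2 : forall a b c, \sum_i R i c * hcomul H i a b
                 = \sum_q \sum_s R a q * R b s * hmul H q s 0 c.
Hypothesis ax3 : forall a b c, \sum_q R a q * hcomul H q b c
                 = \sum_p \sum_r R p c * R r b * hmul H p r 0 a.

Lemma epsL_idem : mulv H (epsL H R) (epsL H R) = epsL H R.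
Proof.
apply/rowP => c; rewrite mulv_epsLE.
rewrite (eq_bigr (fun a => \sum_b hcounit H a * hcounit H b * \sum_i R i c * hcomul H i a b)); last first.
  by move=> a _; apply: eq_bigr => b _; rewrite ax2.
rewrite exchange_big /= !mxE; apply: eq_bigr => b _.
rewrite (eq_bigr (fun a => hcounit H b * \sum_i R i c * (hcounit H a * hcomul H i a b))); last first.
  move=> a _; rewrite !mulr_sumr; apply: eq_bigr => i _; ring.
rewrite -mulr_sumr exchange_big /=.
rewrite (eq_bigr (fun i => R i c * (i == b)%:R)); last first.
  by move=> i _; rewrite -mulr_sumr counitL.
by rewrite sum_delta mxE mulrC.
Qed.

Lemma epsR_idem : mulv H (epsR H R) (epsR H R) = epsR H R.
Proof.
apply/rowP => c; rewrite /epsR mulv_epsLE.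
rewrite (eq_bigr (fun a => \sum_b hcounit H a * hcounit H b * \sum_q R c q * hcomul H q b a)); last first.
  move=> a _; apply: eq_bigr => b _; rewrite ax3; congr (_ * _).
  by apply: eq_bigr => p _; apply: eq_bigr => r _; rewrite !mxE.
rewrite !mxE; apply: eq_bigr => a _.
rewrite (eq_bigr (fun b => hcounit H a * \sum_q R c q * (hcounit H b * hcomul H q b a))); last first.
  move=> b _; rewrite !mulr_sumr; apply: eq_bigr => i _; ring.
rewrite -mulr_sumr exchange_big /=.
rewrite (eq_bigr (fun q => R c q * (q == a)%:R)); last first.
  by move=> q _; rewrite -mulr_sumr counitL.
by rewrite sum_delta !mxE.
Qed.
End Eps3.

Section Eps4.
Variables (F : fieldType) (n : nat) (H : hopf_data F n).

Lemma tens_tr (a b : 'rV[F]_n) : (tens a b)^T = tens b a.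
Proof. by rewrite /tens trmx_mul trmxK. Qed.

Lemma trmx_mulT T U : (mulT H T U)^T = mulT H T^T U^T.
Proof.
rewrite /mulT !linear_sum /= exchange_big /=; apply: eq_bigr => j _.
rewrite linear_sum; apply: eq_bigr => i _.
rewrite linear_sum /= exchange_big /=; apply: eq_bigr => l _.
rewrite linear_sum; apply: eq_bigr => k _.
by rewrite linearZ /= tens_tr !mxE.
Qed.

Hypothesis counit_mul : forall i j, counitv H (hmul H i j) = hcounit H i * hcounit H j.

Lemma epsR_mulT T U : epsR H (mulT H T U) = mulv H (epsR H T) (epsR H U).
Proof. by rewrite /epsR trmx_mulT epsL_mulT. Qed.

Lemma epsL_oneT : counitv H (hunit H) = 1 -> epsL H (oneT H) = hunit H.
Proof. by move=> e; rewrite /oneT epsL_tens e scale1r. Qed.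

Lemma epsR_oneT : counitv H (hunit H) = 1 -> epsR H (oneT H) = hunit H.
Proof. by move=> e; rewrite /epsR /oneT tens_tr epsL_oneT. Qed.

Hypothesis assoc : forall a b c, mulv H (mulv H a b) c = mulv H a (mulv H b c).
Hypothesis unitax : forall a, mulv H (hunit H) a = a /\ mulv H a (hunit H) = a.

Lemma idem_unit w u : mulv H w u = hunit H -> mulv H u u = u -> u = hunit H.
Proof.
move=> wu uu.
by rewrite -[u](proj1 (unitax u)) -wu assoc uu.
Qed.
End Eps4.

Section Braid.
Variables (F : fieldType) (n : nat) (H : hopf_data F n) (R : 'M[F]_n).
Variables (m p : nat) (X : 'I_n -> 'M[F]_m) (Y : 'I_n -> 'M[F]_p).

Definition Phi (Z : 'M[F]_(m,p)) (T : 'M[F]_n) : 'M[F]_(m,p) :=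
  \sum_a \sum_b T a b *: (X a *m Z *m (Y b)^T).

Lemma Phi_sum Z (I : finType) (T : I -> 'M[F]_n) : Phi Z (\sum_t T t) = \sum_t Phi Z (T t).
Proof.
rewrite /Phi [RHS]exchange_big /=; apply: eq_bigr => a _.
rewrite [RHS]exchange_big /=; apply: eq_bigr => b _.
by rewrite summxE scaler_suml.
Qed.

Lemma Phi_scale Z c T : Phi Z (c *: T) = c *: Phi Z T.
Proof.
rewrite /Phi scaler_sumr; apply: eq_bigr => a _.
by rewrite scaler_sumr; apply: eq_bigr => b _; rewrite mxE scalerA.
Qed.

Lemma Phi_tens Z u v : Phi Z (tens u v) = actv X u *m Z *m (actv Y v)^T.
Proof.
rewrite /Phi /actv !mulmx_suml; apply: eq_bigr => a _.
rewrite linear_sum /= mulmx_sumr; apply: eq_bigr => b _.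
rewrite /tens mxE big_ord1 !mxE linearZ /= -!scalemxAl -scalemxAr scalerA.
by [].
Qed.

Hypothesis modX : is_module H X.
Hypothesis modY : is_module H Y.

Lemma actv_hmul q (act : 'I_n -> 'M[F]_q) i k : is_module H act ->
  actv act (hmul H i k) = act i *m act k.
Proof. by move=> [_ M]; rewrite -mulv_basis M !actv_basis. Qed.

Lemma double_braid Z :
  braid R Y X (braid R X Y Z) = Phi Z (mulT H R^T R).
Proof.
rewrite /mulT Phi_sum /braid exchange_big /=; apply: eq_bigr => i _.
rewrite Phi_sum; apply: eq_bigr => j _.
rewrite linear_sum /= mulmx_sumr mulmx_suml scaler_sumr Phi_sum; apply: eq_bigr => k _.
rewrite linear_sum /= mulmx_sumr mulmx_suml scaler_sumr Phi_sum; apply: eq_bigr => l _.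
rewrite Phi_scale Phi_tens !actv_hmul // !mxE.
rewrite linearZ /= !trmx_mul !trmxK -scalemxAr -scalemxAl scalerA !mulmxA.
by [].
Qed.
End Braid.

Section Pull.
Variables (F : fieldType) (n k : nat) (H : hopf_data F n) (K : hopf_data F k) (P : 'M[F]_(n,k)).

Lemma actv_pullback m (X : 'I_k -> 'M[F]_m) a :
  actv (pullback P X) a = actv X (a *m P).
Proof.
rewrite /actv /pullback.
rewrite (eq_bigr (fun i => \sum_l (a 0 i * P i l) *: X l)); last first.
  by move=> i _; rewrite scaler_sumr; apply: eq_bigr => l _; rewrite scalerA.
rewrite exchange_big /=; apply: eq_bigr => l _.
by rewrite !mxE scaler_suml.
Qed.

Hypothesis hm : hopf_map H K P.

Lemma pullback_module m (X : 'I_k -> 'M[F]_m) : is_module K X -> is_module H (pullback P X).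
Proof.
case: hm => [hmulP [hunitP _]] [u M]; split.
  by rewrite actv_pullback hunitP.
by move=> a b; rewrite !actv_pullback hmulP M.
Qed.

Lemma epsr_P : epsr K *m P^T = epsr H.
Proof.
case: hm => [_ [_ [_ [hcP _]]]].
apply/rowP => i; rewrite !mxE.
have e : counitv H (basisv F i) = hcounit H i.
  rewrite /counitv (bigD1 i) //= big1 ?addr0.
    by rewrite !mxE !eqxx mul1r.
  by move=> j Hj; rewrite !mxE (negbTE Hj) andbF mul0r.
rewrite -e -hcP /counitv; apply: eq_bigr => l _; rewrite !mxE mulrC; congr (_ * _).
rewrite (bigD1 i) //= big1 ?addr0.
  by rewrite !mxE !eqxx mul1r.
by move=> j Hj; rewrite !mxE (negbTE Hj) andbF mul0r.
Qed.
End Pull.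

Section PhiPull.
Variables (F : fieldType) (n k m p : nat) (P : 'M[F]_(n,k)) (X : 'I_k -> 'M[F]_m) (Y : 'I_n -> 'M[F]_p).

Lemma Phi_pull Z (Q : 'M[F]_n) :
  Phi (pullback P X) Y Z Q = \sum_l X l *m Z *m (actv Y ((col l P)^T *m Q))^T.
Proof.
rewrite /Phi /pullback.
rewrite (eq_bigr (fun a => \sum_b \sum_l (Q a b * P a l) *: (X l *m Z *m (Y b)^T))); last first.
  move=> a _; apply: eq_bigr => b _.
  rewrite !mulmx_suml scaler_sumr; apply: eq_bigr => l _.
  by rewrite -!scalemxAl scalerA.
rewrite (eq_bigr (fun a => \sum_l \sum_b (Q a b * P a l) *: (X l *m Z *m (Y b)^T))); last first.
  by move=> a _; rewrite exchange_big.
rewrite exchange_big /= [RHS](eq_bigr (fun l => \sum_b \sum_a (Q a b * P a l) *: (X l *m Z *m (Y b)^T))); last first.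
  move=> l _; rewrite /actv linear_sum /= mulmx_sumr; apply: eq_bigr => b _.
  rewrite linearZ /= -scalemxAr !mxE scaler_suml; apply: eq_bigr => a _.
  by rewrite !mxE mulrC.
apply: eq_bigr => l _.
by rewrite exchange_big.
Qed.
End PhiPull.

Section Regular.
Variables (F : fieldType) (k : nat) (G : hopf_data F k).

Definition Xr (l : 'I_k) : 'M[F]_k := \matrix_(c, b) hmul G l b 0 c.

Lemma mulv_basisR a d : mulv G a (basisv F d) = \sum_i a 0 i *: hmul G i d.
Proof.
rewrite /mulv; apply: eq_bigr => i _.
rewrite (bigD1 d) //= big1 ?addr0.
  by rewrite !mxE !eqxx mulr1.
by move=> j Hj; rewrite !mxE (negbTE Hj) andbF mulr0 scale0r.
Qed.

Lemma mulv_linR a v : mulv G a v = \sum_d v 0 d *: mulv G a (basisv F d).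
Proof.
rewrite [RHS](eq_bigr (fun d => \sum_i (v 0 d * a 0 i) *: hmul G i d)); last first.
  by move=> d _; rewrite mulv_basisR scaler_sumr; apply: eq_bigr => i _; rewrite scalerA.
rewrite /mulv exchange_big /=.
apply: eq_bigr => d _.
by apply: eq_bigr => i _; rewrite mulrC.
Qed.

Lemma actv_Xr a : actv Xr a = \matrix_(c, b) (mulv G a (basisv F b)) 0 c.
Proof.
apply/matrixP => c b; rewrite [RHS]mxE mulv_basisR /actv !summxE.
by apply: eq_bigr => l _; rewrite !mxE.
Qed.

Hypothesis assoc : forall a b c, mulv G (mulv G a b) c = mulv G a (mulv G b c).
Hypothesis unitax : forall a, mulv G (hunit G) a = a /\ mulv G a (hunit G) = a.

Lemma Xr_module : is_module G Xr.
Proof.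
split.
  apply/matrixP => c b; rewrite actv_Xr !mxE (proj1 (unitax _)) mxE /=.
  by rewrite eq_sym.
move=> a b; apply/matrixP => c b'; rewrite actv_Xr !mxE assoc.
rewrite (mulv_linR a) summxE; apply: eq_bigr => d _.
by rewrite !actv_Xr !mxE mulrC.
Qed.
End Regular.

Lemma delta_mulE (F : fieldType) a' r k' (a : 'I_a') (b : 'I_k') (B : 'M[F]_(k', r)) l j :
  (delta_mx a b *m B) l j = (l == a)%:R * B b j.
Proof.
rewrite mxE (bigD1 b) //= big1 ?addr0.
  by rewrite mxE eqxx andbT.
by move=> q Hq; rewrite mxE (negbTE Hq) andbF mul0r.
Qed.

Theorem mainTheorem3 (F : fieldType) (n k : nat) (H : hopf_data F n)
    (K : hopf_data F k) (R : 'M[F]_(n, n)) (P : 'M[F]_(n, k)) :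
  is_hopf H -> is_hopf K -> quasitriangular H R -> hopf_map H K P ->
  (forall y : 'rV[F]_k, exists x : 'rV[F]_n, x *m P = y) ->
  forall (p : nat) (Y : 'I_n -> 'M[F]_p), is_module H Y ->
  (in_Rep_quot H R P Y <->
   forall (m : nat) (X : 'I_k -> 'M[F]_m), is_module K X ->
     forall Z : 'M[F]_(m, p),
       braid R Y (pullback P X) (braid R (pullback P X) Y Z) = Z).
Proof.
move=> hH hK qH hm _ p Y modY.
have [assocH [unitH [_ [counitH [_ [_ [cmulH [cunitH _]]]]]]]] := hH.
have [assocK [unitK [_ [_ [_ [_ [_ [cunitK _]]]]]]]] := hK.
have [[Ri [RRi [RiR _]]] [ax2 ax3]] := qH.
have [_ [hunitP _]] := hm.
have cL : forall i k0, \sum_j hcounit H j * hcomul H i j k0 = (i == k0)%:R.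
  by move=> i k0; case: (counitH i k0).
have eLR : epsL H R = hunit H.
  apply: (idem_unit assocH unitH (w := epsL H Ri)).
    by rewrite -(epsL_mulT cmulH) RiR epsL_oneT.
  exact: epsL_idem cL ax2.
have eRR : epsR H R = hunit H.
  apply: (idem_unit assocH unitH (w := epsR H Ri)).
    by rewrite -(epsR_mulT cmulH) RiR epsR_oneT.
  exact: epsR_idem cL ax3.
set Q := mulT H R^T R.
have eLQ : epsL H Q = hunit H.
  rewrite /Q (epsL_mulT cmulH) -/(epsR H R) eRR eLR.
  exact: (proj1 (unitH _)).
have eRQ : epsR H Q = hunit H.
  rewrite /Q (epsR_mulT cmulH) {1}/epsR trmxK eRR eLR.
  exact: (proj1 (unitH _)).
have cLelt : forall f, counitv H (Lelt H R P f) = (hunit K *m f) 0 0.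
  move=> f; rewrite counitvE /Lelt -/Q -mulmxA.
  have -> : Q *m (epsr H)^T = (hunit H)^T.
    by rewrite -eRQ /epsR /epsL trmx_mul trmxK.
  by rewrite -trmx_mul mxE mulmxA hunitP.
set M := fun l => actv Y (Lelt H R P (delta_mx l 0)).
have colQ : forall l, (col l P)^T *m Q = Lelt H R P (delta_mx l 0).
  by move=> l; rewrite colE.
have Ldec : forall f, actv Y (Lelt H R P f) = \sum_l f l 0 *: M l.
  move=> f; rewrite {1}(matrix_sum_delta f) /Lelt.
  rewrite -/Q [P *m _]mulmx_sumr [_^T]linear_sum /= mulmx_suml actv_sum; apply: eq_bigr => l _.
  rewrite big_ord1 -scalemxAr linearZ /= -scalemxAl actvZ.
  by [].
split.
- move=> HQ.
  have step1 : forall f, actv Y (Lelt H R P f) = (hunit K *m f) 0 0 *: 1%:M.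
    move=> f; set c := (hunit K *m f) 0 0.
    set g := (epsr K)^T.
    have Lg : Lelt H R P g = hunit H.
      by rewrite /Lelt trmx_mul trmxK (epsr_P hm) -/Q -eLQ.
    have Kg : (hunit K *m g) 0 0 = 1 by rewrite /g -counitvE.
    have : actv Y (Lelt H R P (f - c *: g)) = 0.
      apply: HQ; exists 1%N, (fun _ => hunit H), (fun _ => Lelt H R P (f - c *: g)).
      split.
        move=> t; split; first by exists (f - c *: g).
        rewrite cLelt mulmxBr -scalemxAr !mxE /c mxE; rewrite !mxE in Kg; by rewrite Kg mulr1 subrr.
      by rewrite big_ord1 (proj1 (unitH _)).
    rewrite /Lelt mulmxBr -scalemxAr linearB linearZ /= mulmxBl -scalemxAl.
    rewrite -/(Lelt H R P f) -/(Lelt H R P g) Lg actvB actvZ (proj1 modY).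
    by move/eqP; rewrite subr_eq0 => /eqP.
  move=> m X modX Z.
  rewrite (double_braid R (pullback_module hm modX) modY).
  rewrite -/Q Phi_pull.
  transitivity (\sum_l hunit K 0 l *: (X l *m Z)).
    apply: eq_bigr => l _; rewrite colQ step1 linearZ /= trmx1 -scalemxAr mulmx1.
    congr (_ *: _); rewrite mxE (bigD1 l) //= big1 ?addr0.
      by rewrite mxE !eqxx mulr1.
    by move=> q Hq; rewrite mxE (negbTE Hq) mulr0.
  rewrite (eq_bigr (fun l => (hunit K 0 l *: X l) *m Z)); last by move=> l _; rewrite scalemxAl.
  rewrite -mulmx_suml.
  by rewrite -/(actv X (hunit K)) (proj1 modX) mul1mx.
- move=> HB.
  have XrU : forall l, Xr K l *m (hunit K)^T = delta_mx l 0.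
    move=> l; rewrite -(actv_basis (Xr K)) actv_Xr; apply/matrixP => c j.
    rewrite (ord1 j) mxE.
    have := f_equal (fun v : 'rV[F]_k => v 0 c) (proj2 (unitK (basisv F l))).
    rewrite (mulv_linR _ (basisv F l)) summxE /= => E.
    rewrite [RHS]mxE andbT -[(c == l)%:R](_ : basisv F l 0 c = _); last by rewrite mxE eqxx.
    rewrite -E; apply: eq_bigr => b _; rewrite !mxE mulrC.
    by [].
  have Mval : forall l, M l = hunit K 0 l *: 1%:M.
    move=> l; apply/matrixP => j i.
    have E := HB k (Xr K) (Xr_module assocK unitK) ((hunit K)^T *m delta_mx 0 i).
    rewrite (double_braid R (pullback_module hm (Xr_module assocK unitK)) modY) in E.
    rewrite -/Q Phi_pull in E.
    have E2 := f_equal (fun A : 'M[F]_(k,p) => A l j) E.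
    move: E2 => /=; rewrite summxE.
    rewrite (eq_bigr (fun l' => (l == l')%:R * M l' j i)); last first.
      move=> l' _; rewrite mulmxA XrU mul_delta_mx delta_mulE colQ mxE.
      by [].
    rewrite (bigD1 l) //= eqxx mul1r big1 ?addr0; last first.
      by move=> q Hq; rewrite eq_sym (negbTE Hq) mul0r.
    by move=> ->; rewrite mxE big_ord1 !mxE eqxx /=.
  move=> x [N [hs [ls [Hl ->]]]].
  rewrite actv_sum; apply: big1 => t _.
  rewrite (proj2 modY).
  have [[f Ef] c0] := Hl t.
  have -> : actv Y (ls t) = 0.
    rewrite Ef Ldec.
    rewrite (eq_bigr (fun l => (f l 0 * hunit K 0 l) *: (1%:M : 'M[F]_p))); last first.
      by move=> l _; rewrite Mval scalerA.
    rewrite -scaler_suml.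
    move: c0; rewrite Ef cLelt mxE => c0.
    rewrite (eq_bigr (fun l => hunit K 0 l * f l 0)) in c0; last by [].
    rewrite (eq_bigr (fun l => hunit K 0 l * f l 0)); last by move=> l _; rewrite mulrC.
    by rewrite c0 scale0r.
  by rewrite mulmx0.
Qed.
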